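(* Let $t\in(0,1/2)$ and $s\geq 1$. For $a,b>0$ define $$Q_{t,s}(a,b)=G^{s}\big(ta+(1-t)b,\ tb+(1-t)a\big)\,A^{1-s}(a,b).$$ Then the inequality $Q_{t,s}(a,b)>AG(a,b)$ holds for all $a,b>0$ with $a\neq b$ if and only if $t\geq \frac12-\frac{\sqrt{2s}}{4s}$.
   Context: For $a,b>0$: $G(a,b)=\sqrt{ab}$ is the geometric mean and $A(a,b)=(a+b)/2$ is the arithmetic mean. $AG(a,b)$ is the arithmetic-geometric mean: the common limit of the sequences defined by $a_0=a$, $b_0=b$, $a_{n+1}=(a_n+b_n)/2$, $b_{n+1}=\sqrt{a_nb_n}$. *)

(* Defs.v *)
From Stdlib Require Import Reals.
From Coquelicot Require Import Coquelicot.
Open Scope R_scope.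

Definition Gm (a b : R) : R := sqrt (a * b).
Definition Am (a b : R) : R := (a + b) / 2.

Fixpoint agm_seq (a b : R) (n : nat) : R * R :=
  match n with
  | O => (a, b)
  | S m => let p := agm_seq a b m in (Am (fst p) (snd p), Gm (fst p) (snd p))
  end.

(* AG(a,b): the (common) limit of the sequences a_n, b_n; taken as the limit of a_n *)
Definition AG (a b : R) : R := real (Lim_seq (fun n => fst (agm_seq a b n))).

Definition Q (t s a b : R) : R :=
  Rpower (Gm (t * a + (1 - t) * b) (t * b + (1 - t) * a)) s * Rpower (Am a b) (1 - s).

(* Main.v *)
Require Import Defs.
From Stdlib Require Import Reals Lra Psatz.
From Coquelicot Require Import Coquelicot.
Open Scope R_scope.

Lemma L1 z : 0 < z -> ln z <= z - 1.
Proof.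
  intros Hz. destruct (Req_dec (ln z) 0) as [E|E].
  - assert (z = 1). { rewrite <- (exp_ln z Hz), E. apply exp_0. } subst; lra.
  - pose proof (exp_ineq1 _ E). rewrite exp_ln in H by lra. lra.
Qed.

Lemma ln_divm x m : 0 < x -> 0 < m -> ln (x / m) = ln x - ln m.
Proof. intros. unfold Rdiv. rewrite ln_mult, ln_Rinv; try lra. apply Rinv_0_lt_compat; lra. Qed.

Lemma L2 l x y : 0 <= l <= 1 -> 0 < x -> 0 < y ->
  l * ln x + (1 - l) * ln y <= ln (l * x + (1 - l) * y).
Proof.
  intros Hl Hx Hy. set (m := l * x + (1 - l) * y).
  assert (Hm : 0 < m).
  { unfold m. destruct (Req_dec l 0) as [->|]; [lra|].
    assert (0 < l * x) by (apply Rmult_lt_0_compat; lra). nra. }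
  assert (H1 := L1 (x / m) ltac:(apply Rdiv_lt_0_compat; lra)).
  assert (H2 := L1 (y / m) ltac:(apply Rdiv_lt_0_compat; lra)).
  rewrite ln_divm in H1, H2 by lra.
  assert (E : l * (x / m - 1) + (1 - l) * (y / m - 1) = 0).
  { unfold m; field. fold m; lra. }
  nra.
Qed.

Lemma ln_sqrt' x : 0 < x -> ln (sqrt x) = ln x / 2.
Proof.
  intros. assert (Hs : 0 < sqrt x) by (apply sqrt_lt_R0; lra).
  assert (ln x = ln (sqrt x * sqrt x)) by (rewrite sqrt_sqrt; lra).
  rewrite ln_mult in H0 by lra. lra.
Qed.

Lemma ln_le_inv x y : 0 < x -> 0 < y -> ln x <= ln y -> x <= y.
Proof.
  intros. destruct (Rle_or_lt x y); auto.
  pose proof (ln_increasing y x H0 H2). lra.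
Qed.

Lemma agm_pos a b : 0 < a -> 0 < b -> forall n,
  0 < fst (agm_seq a b n) /\ 0 < snd (agm_seq a b n).
Proof.
  intros Ha Hb n. induction n as [|n [IH1 IH2]]; [simpl; lra|].
  cbn [agm_seq fst snd].
  unfold Am, Gm. split; [lra|]. apply sqrt_lt_R0. nra.
Qed.

Lemma gm_le_am x y : 0 < x -> 0 < y -> Gm x y <= Am x y.
Proof.
  intros. unfold Gm, Am. rewrite <- (sqrt_square ((x + y) / 2)) by lra.
  apply sqrt_le_1_alt. pose proof (pow2_ge_0 (x - y)). nra.
Qed.

Lemma gm_ge x y : 0 < y -> y <= x -> y <= Gm x y.
Proof.
  intros. unfold Gm. rewrite <- (sqrt_square y) at 1 by lra.
  apply sqrt_le_1_alt. nra.
Qed.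

Lemma agm_inv a b : 0 < a -> 0 < b -> forall k,
  snd (agm_seq a b 2) <= snd (agm_seq a b (k + 2)) /\
  snd (agm_seq a b (k + 2)) <= fst (agm_seq a b (k + 2)) /\
  fst (agm_seq a b (k + 2)) <= fst (agm_seq a b 2).
Proof.
  intros Ha Hb k. induction k as [|k [I1 [I2 I3]]].
  - simpl (0+2)%nat. split; [lra|]. split; [|lra].
    destruct (agm_pos a b Ha Hb 1). simpl. apply gm_le_am; simpl in *; auto.
  - replace (S k + 2)%nat with (S (k + 2)) by lia.
    destruct (agm_pos a b Ha Hb (k+2)) as [P1 P2].
    assert (E : agm_seq a b (S (k+2)) = (Am (fst (agm_seq a b (k+2))) (snd (agm_seq a b (k+2))),
                 Gm (fst (agm_seq a b (k+2))) (snd (agm_seq a b (k+2))))) by reflexivity.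
    rewrite E; simpl fst; simpl snd.
    set (x := fst (agm_seq a b (k + 2))) in *. set (y := snd (agm_seq a b (k + 2))) in *.
    pose proof (gm_ge x y P2 I2). pose proof (gm_le_am x y P1 P2).
    assert (Am x y <= x) by (unfold Am; lra). simpl in I1, I3. repeat split; lra.
Qed.

Lemma AG_bounds a b : 0 < a -> 0 < b ->
  snd (agm_seq a b 2) <= AG a b <= fst (agm_seq a b 2).
Proof.
  intros Ha Hb. unfold AG.
  rewrite <- (Lim_seq_incr_n (fun n => fst (agm_seq a b n)) 2).
  assert (H1 := Lim_seq_le_loc (fun _ => snd (agm_seq a b 2)) (fun n => fst (agm_seq a b (n + 2)))
     ltac:(exists O; intros k _; destruct (agm_inv a b Ha Hb k); lra)).
  assert (H2 := Lim_seq_le_loc (fun n => fst (agm_seq a b (n + 2))) (fun _ => fst (agm_seq a b 2))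
     ltac:(exists O; intros k _; destruct (agm_inv a b Ha Hb k); lra)).
  rewrite Lim_seq_const in H1, H2.
  destruct (Lim_seq (fun n => fst (agm_seq a b (n + 2)))); simpl in *; try contradiction; lra.
Qed.

Lemma exp_le' x y : x <= y -> exp x <= exp y.
Proof. intros [H|H]; [left; apply exp_increasing; auto| rewrite H; lra]. Qed.

Lemma Q_exp t s a b : 0 < t < 1/2 -> 0 < a -> 0 < b ->
  Q t s a b = exp (s * (ln ((t * a + (1 - t) * b) * (t * b + (1 - t) * a)) / 2) + (1 - s) * ln (Am a b)).
Proof.
  intros Ht Ha Hb. unfold Q, Rpower, Gm. rewrite ln_sqrt'.
  - rewrite exp_plus. reflexivity.
  - apply Rmult_lt_0_compat; nra.
Qed.

Lemma K u r s : 0 < u < 1 -> 1 <= s -> 2 * s * (r * r) <= 1 ->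
  ln (1 - u / 2) <= s * ln (1 - r * r * u).
Proof.
  intros Hu Hs Hr.
  assert (H1 : ln (1 - u / (2 * s)) <= ln (1 - r * r * u)).
  { apply ln_le.
    - assert (u / (2 * s) <= u / 2). { unfold Rdiv. apply Rmult_le_compat_l; [lra|].
        apply Rinv_le_contravar; lra. } lra.
    - assert (r * r * u <= u / (2 * s)).
      { apply (Rmult_le_reg_r (2 * s)); [lra|]. field_simplify; [|lra].
        pose proof (Rle_0_sqr r). unfold Rsqr in *. nra. }
      lra. }
  assert (H2 := L2 (/ s) (1 - u / 2) 1 ltac:(split; [left; apply Rinv_0_lt_compat; lra|
     rewrite <- Rinv_1; apply Rinv_le_contravar; lra]) ltac:(lra) ltac:(lra)).
  rewrite ln_1 in H2.
  replace (/ s * (1 - u / 2) + (1 - / s) * 1) with (1 - u / (2 * s)) in H2 by (field; lra).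
  assert (H3 : / s * ln (1 - u / 2) <= ln (1 - r * r * u)) by lra.
  apply (Rmult_le_compat_l s) in H3; [|lra].
  rewrite <- Rmult_assoc, Rinv_r in H3 by lra. lra.
Qed.

Lemma suff t s a b : 0 < t < 1/2 -> 1 <= s -> 2 * s * ((1 - 2 * t) * (1 - 2 * t)) <= 1 ->
  0 < a -> 0 < b -> a <> b -> Q t s a b > AG a b.
Proof.
  intros Ht Hs Hr Ha Hb Hab.
  rewrite Q_exp by lra.
  set (r := 1 - 2 * t) in *.
  set (A := Am a b).
  assert (HA : 0 < A) by (unfold A, Am; lra).
  assert (Hab2 : a * b < A * A).
  { unfold A, Am. assert (a - b <> 0) by lra. pose proof (Rsqr_pos_lt _ H). unfold Rsqr in *. nra. }
  set (u := 1 - a * b / (A * A)).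
  assert (Hu : 0 < u < 1).
  { unfold u. split.
    - assert (a * b / (A * A) < 1). { apply (Rmult_lt_reg_r (A * A)); [nra|]. field_simplify; lra. } lra.
    - assert (0 < a * b / (A * A)) by (apply Rdiv_lt_0_compat; nra). lra. }
  assert (HP : (t * a + (1 - t) * b) * (t * b + (1 - t) * a) = A * A * (1 - r * r * u)).
  { unfold u, r, A, Am. field. unfold A, Am in HA; lra. }
  assert (Hw : 0 < 1 - r * r * u).
  { assert (r * r <= 1 / 2). { apply (Rmult_le_reg_l (2 * s)); [lra|]. assert (0 <= r * r) by nra. nra. }
    assert (0 <= r * r) by nra. nra. }
  assert (HK := K u r s Hu Hs Hr).
  set (g := sqrt (a * b)).
  assert (Hg : 0 < g) by (apply sqrt_lt_R0; nra).
  assert (Hgg : g * g = a * b) by (apply sqrt_sqrt; nra).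
  set (T := sqrt ((A * A + a * b) / 2)).
  assert (HT1 : (A + g) / 2 < T).
  { unfold T. rewrite <- (sqrt_square ((A + g) / 2)) by lra. apply sqrt_lt_1_alt. split; [nra|].
    assert (g < A) by nra. nra. }
  assert (HT2 : T <= exp (s * (ln ((t * a + (1 - t) * b) * (t * b + (1 - t) * a)) / 2) + (1 - s) * ln A)).
  { assert (Hz : (A * A + a * b) / 2 = A * A * (1 - u / 2)) by (unfold u; field; lra).
    unfold T. rewrite Hz, HP.
    rewrite <- (exp_ln (sqrt (A * A * (1 - u / 2)))) by (apply sqrt_lt_R0; apply Rmult_lt_0_compat; nra).
    apply exp_le'. rewrite ln_sqrt' by (apply Rmult_lt_0_compat; nra).
    rewrite !ln_mult by nra. nra. }
  destruct (AG_bounds a b Ha Hb) as [_ H2].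
  simpl in H2. change (Am a b) with A in H2. change (Gm a b) with g in H2. unfold Am in H2.
  lra.
Qed.

Lemma nec t s : 0 < t < 1/2 -> 1 <= s -> 1 < 2 * s * ((1 - 2 * t) * (1 - 2 * t)) ->
  exists a b, 0 < a /\ 0 < b /\ a <> b /\ Q t s a b < AG a b.
Proof.
  intros Ht Hs Hc.
  set (r := 1 - 2 * t) in *. set (c := 2 * s * (r * r)) in *.
  set (y := (c - 1) / (2 * c)).
  assert (Hy : 0 < y < 1/2).
  { unfold y. split; [apply Rdiv_lt_0_compat; lra|].
    apply (Rmult_lt_reg_r (2 * c)); [lra|]. field_simplify; lra. }
  set (x := sqrt y).
  assert (Hx : 0 < x) by (apply sqrt_lt_R0; lra).
  assert (Hxx : x * x = y) by (apply sqrt_sqrt; lra).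
  assert (Hx1 : x < 1) by nra.
  exists (1 + x), (1 - x). split; [lra|]. split; [lra|]. split; [lra|].
  rewrite Q_exp by lra.
  assert (HA : Am (1 + x) (1 - x) = 1) by (unfold Am; field).
  assert (HP : (t * (1 + x) + (1 - t) * (1 - x)) * (t * (1 - x) + (1 - t) * (1 + x)) = 1 - r * r * y).
  { rewrite <- Hxx. unfold r. ring. }
  rewrite HA, HP, ln_1.
  assert (Hrr : r * r * y < 1) by (assert (r * r < 1) by (unfold r; nra); nra).
  destruct (AG_bounds (1 + x) (1 - x) ltac:(lra) ltac:(lra)) as [H1 _].
  simpl in H1. rewrite HA in H1. unfold Gm in H1.
  replace ((1 + x) * (1 - x)) with (1 - y) in H1 by (rewrite <- Hxx; ring).
  rewrite Rmult_1_l in H1.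
  set (b2 := sqrt (sqrt (1 - y))) in *.
  assert (Hs1 : 0 < sqrt (1 - y)) by (apply sqrt_lt_R0; lra).
  assert (Hb2 : 0 < b2) by (apply sqrt_lt_R0; lra).
  assert (Hlb : ln b2 = ln (1 - y) / 4).
  { unfold b2. rewrite !ln_sqrt' by lra. field. }
  apply (Rlt_le_trans _ b2); [|exact H1].
  rewrite <- (exp_ln b2) by lra. apply exp_increasing. rewrite Hlb.
  pose proof (L1 (1 - r * r * y) ltac:(lra)) as E1.
  pose proof (L1 (/ (1 - y)) ltac:(apply Rinv_0_lt_compat; lra)) as E2.
  rewrite ln_Rinv in E2 by lra.
  assert (Hz : / (1 - y) * (1 - y) = 1) by (field; lra).
  set (z := / (1 - y)) in *.
  assert (Hzc : z < c).
  { assert (c * (1 - y) > 1).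
    { unfold y. field_simplify; [|lra]. apply (Rmult_lt_reg_r 2); [lra|]. field_simplify; lra. }
    nra. }
  assert (2 * s * ln (1 - r * r * y) <= - c * y) by (unfold c; nra).
  nra.
Qed.

Lemma cond t s : 0 < t < 1/2 -> 1 <= s ->
  (t >= 1 / 2 - sqrt (2 * s) / (4 * s) <-> 2 * s * ((1 - 2 * t) * (1 - 2 * t)) <= 1).
Proof.
  intros Ht Hs.
  set (q := sqrt (2 * s)).
  assert (Hq : 0 < q) by (apply sqrt_lt_R0; lra).
  assert (Hqq : q * q = 2 * s) by (apply sqrt_sqrt; lra).
  replace (q / (4 * s)) with (/ (2 * q)) by (replace (4 * s) with (2 * (q * q)) by lra; field; lra).
  rewrite <- Hqq.
  assert (E : t >= 1/2 - / (2 * q) <-> (1 - 2 * t) * q <= 1).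
  { split; intro H.
    - assert (1 - 2 * t <= / q) by (rewrite Rinv_mult in H; lra).
      apply (Rmult_le_compat_r q) in H0; [|lra]. rewrite Rinv_l in H0 by lra. lra.
    - assert (1 - 2 * t <= / q).
      { apply (Rmult_le_reg_r q); [lra|]. rewrite Rinv_l by lra. lra. }
      rewrite Rinv_mult. lra. }
  rewrite E. split; intro H.
  - assert (0 <= (1 - 2 * t) * q) by nra. nra.
  - destruct (Rle_or_lt ((1 - 2 * t) * q) 1); auto. nra.
Qed.

Theorem theorem1p1 (t s : R) (ht : 0 < t < 1 / 2) (hs : 1 <= s) :
  (forall a b : R, 0 < a -> 0 < b -> a <> b -> Q t s a b > AG a b) <->
  t >= 1 / 2 - sqrt (2 * s) / (4 * s).
Proof.
  rewrite cond by auto. split.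
  - intros H. destruct (Rle_or_lt (2 * s * ((1 - 2 * t) * (1 - 2 * t))) 1) as [h|h]; auto.
    destruct (nec t s ht hs h) as (a & b & Ha & Hb & Hab & HQ).
    specialize (H a b Ha Hb Hab). lra.
  - intros H a b Ha Hb Hab. apply suff; auto.
Qed.
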